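(* Let $k\ge2$, $a>0$, $0<\theta<1$, $\lambda=a^k$, and $\gamma(u)=a(1+\theta)-u+\frac{u-a\theta}{1+u^k}$. Then $\gamma$ maps $[a\theta,a]$ into itself and has a unique fixed point $\xi\in(a\theta,a)$. Moreover $\gamma'(\xi)<-1$ holds if and only if $\theta<\frac{k-1}{k+1}$ and $\lambda>\frac{1}{k-1-(k+1)\theta}\bigl(\frac{k+1}{k}\bigr)^k$. *)

(* Defs.v *)
From Stdlib Require Import Reals.
Open Scope R_scope.

Definition gamma (k : nat) (a theta : R) (u : R) : R :=
  a * (1 + theta) - u + (u - a * theta) / (1 + u ^ k).

(* Main.v *)
Require Import Defs.
From Stdlib Require Import Reals Lra Lia.
Open Scope R_scope.

Lemma gamma_deriv k a theta x : 1 + x ^ k <> 0 ->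
  derivable_pt_lim (gamma k a theta) x
   (-1 + ((1 + x^k) - INR k * x ^ Init.Nat.pred k * (x - a*theta)) / (1 + x^k)^2).
Proof.
  intros H.
  assert (D := derivable_pt_lim_plus _ _ x _ _
    (derivable_pt_lim_minus _ _ x _ _ (derivable_pt_lim_const (a*(1+theta)) x) (derivable_pt_lim_id x))
    (derivable_pt_lim_div _ _ x _ _
       (derivable_pt_lim_minus _ _ x _ _ (derivable_pt_lim_id x) (derivable_pt_lim_const (a*theta) x))
       (derivable_pt_lim_plus _ _ x _ _ (derivable_pt_lim_const 1 x) (derivable_pt_lim_pow x k)) H)).
  change (gamma k a theta) with
    ((fct_cte (a*(1+theta)) - id)%F + (id - fct_cte (a*theta))%F / (fct_cte 1 + (fun y => y^k))%F)%F.
  match goal with |- derivable_pt_lim _ _ ?L => replace L with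
    (0 - 1 + ((1 - 0) * (1 + x ^ k) - (0 + INR k * x ^ Init.Nat.pred k) * (x - a * theta)) / (1 + x ^ k)²) end.
  exact D.
  unfold Rsqr; simpl; field; auto.
Qed.

Lemma cont_g k a theta : continuity (fun u => 2*u - a*(1+theta) - (u - a*theta)/(1 + Rabs u ^ k)).
Proof.
  assert (cp : continuity (fun u => Rabs u ^ k)).
  { exact (continuity_comp Rabs (fun y => y^k) Rcontinuity_abs (derivable_continuous _ (derivable_pow k))). }
  change (fun u => 2*u - a*(1+theta) - (u - a*theta)/(1 + Rabs u ^ k)) with
   ((mult_real_fct 2 id - fct_cte (a*(1+theta)))%F - ((id - fct_cte (a*theta))%F / (fct_cte 1 + (fun u => Rabs u ^ k))%F))%F.
  apply continuity_minus. apply continuity_minus. apply continuity_scal. apply derivable_continuous, derivable_id.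
  apply continuity_const. intros ? ?; reflexivity.
  apply continuity_div. apply continuity_minus. apply derivable_continuous, derivable_id.
  apply continuity_const. intros ? ?; reflexivity.
  apply continuity_plus. apply continuity_const. intros ? ?; reflexivity. exact cp.
  intros x. unfold plus_fct, fct_cte. assert (0 <= Rabs x ^ k) by (apply pow_le; apply Rabs_pos). lra.
Qed.
Definition psi k a theta u := u^k*(2*u - a*(1+theta)) - (a - u).

Lemma psi_lt k a theta u v : 0 < u < v -> 0 <= 2*u - a*(1+theta) ->
  psi k a theta u < psi k a theta v.
Proof.
  intros [hu huv] hc. unfold psi.
  assert (h1 : u^k <= v^k) by (apply pow_incr; lra).
  assert (h2 : 0 < u^k) by (apply pow_lt; lra).
  assert (u^k * (2*u - a*(1+theta)) <= v^k * (2*v - a*(1+theta))).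
  { apply Rmult_le_compat; lra. }
  lra.
Qed.

Lemma fix_iff k a theta u : 0 < u ->
  (gamma k a theta u = u <-> psi k a theta u = 0).
Proof.
  intros hu. assert (hX : 0 < u^k) by (apply pow_lt; lra).
  unfold gamma, psi.
  set (q := (u - a*theta)/(1+u^k)).
  assert (hq : q * (1 + u^k) = u - a*theta) by (unfold q; field; lra).
  split; intro H.
  - assert (q = 2*u - a*(1+theta)) by lra. subst q. rewrite H0 in hq. nra.
  - assert (q = 2*u - a*(1+theta)).
    { apply Rmult_eq_reg_r with (1 + u^k); [|lra]. nra. }
    lra.
Qed.

Lemma pos_mul p x : 0 < p -> (0 < x <-> 0 < x * p).
Proof. intros; split; intros; nra. Qed.

Theorem mainTheorem9 (k : nat) (a theta : R)
  (hk : (2 <= k)%nat) (ha : 0 < a) (ht0 : 0 < theta) (ht1 : theta < 1) :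
  let lambda := a ^ k in
  (forall u, a * theta <= u <= a ->
     a * theta <= gamma k a theta u <= a) /\
  exists xi,
    (a * theta < xi < a /\ gamma k a theta xi = xi) /\
    (forall u, a * theta <= u <= a -> gamma k a theta u = u -> u = xi) /\
    exists d, derivable_pt_lim (gamma k a theta) xi d /\
      (d < -1 <->
        (theta < (INR k - 1) / (INR k + 1) /\
         lambda > / (INR k - 1 - (INR k + 1) * theta)
                  * ((INR k + 1) / INR k) ^ k)).
Proof.
  intros lambda.
  assert (hat : 0 < a * theta) by nra.
  assert (hat2 : a * theta < a) by nra.
  assert (HK : 2 <= INR k) by (apply (le_INR 2 k) in hk; simpl in hk; lra).
  split.
  { intros u [h1 h2]. unfold gamma.
    assert (hX : 0 < u^k) by (apply pow_lt; lra).
    set (q := (u - a*theta)/(1+u^k)).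
    assert (hq : q * (1 + u^k) = u - a*theta) by (unfold q; field; lra).
    assert (0 <= q) by (unfold q; apply Rmult_le_pos; [lra | left; apply Rinv_0_lt_compat; lra]).
    split; nra. }
  set (g := fun u => 2*u - a*(1+theta) - (u - a*theta)/(1 + Rabs u ^ k)).
  assert (ga : g (a*theta) < 0).
  { unfold g. unfold Rdiv. replace (a*theta - a*theta) with 0 by ring. rewrite Rmult_0_l. nra. }
  assert (gb : 0 < g a).
  { unfold g. rewrite Rabs_pos_eq by lra.
    assert (hX : 0 < a^k) by (apply pow_lt; lra).
    set (q := (a - a*theta)/(1+a^k)).
    assert (hq : q * (1 + a^k) = a - a*theta) by (unfold q; field; lra).
    assert (0 < q) by (unfold q; apply Rdiv_lt_0_compat; lra).
    nra. }
  destruct (IVT g (a*theta) a (cont_g k a theta) hat2 ga gb) as [xi [[hx1 hx2] hgx]].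
  assert (hx3 : a*theta < xi) by (destruct hx1 as [h|h]; [exact h| subst xi; lra]).
  assert (hx4 : xi < a) by (destruct hx2 as [h|h]; [exact h| subst xi; lra]).
  assert (hxpos : 0 < xi) by lra.
  assert (hfix : gamma k a theta xi = xi).
  { unfold g in hgx. rewrite Rabs_pos_eq in hgx by lra. unfold gamma. lra. }
  assert (hpsi : psi k a theta xi = 0) by (apply fix_iff; auto).
  assert (hX : 0 < xi^k) by (apply pow_lt; lra).
  assert (hc : 0 < 2*xi - a*(1+theta)).
  { unfold psi in hpsi. nra. }
  exists xi. split; [split; [lra|exact hfix]|]. split.
  { intros u [h1 h2] hu.
    assert (hup : 0 < u) by lra.
    assert (hpu : psi k a theta u = 0) by (apply fix_iff; auto).
    assert (hcu : 0 <= 2*u - a*(1+theta)).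
    { assert (0 < u^k) by (apply pow_lt; lra). unfold psi in hpu. nra. }
    destruct (Rtotal_order u xi) as [h|[h|h]]; auto.
    - pose proof (psi_lt k a theta u xi ltac:(lra) hcu). lra.
    - pose proof (psi_lt k a theta xi u ltac:(lra) ltac:(lra)). lra. }
  eexists. split.
  { apply gamma_deriv. lra. }
  set (K := INR k). assert (HK2 : 2 <= K) by exact HK.
  set (X := xi^k). set (P := xi ^ Init.Nat.pred k). assert (hX2 : 0 < X) by exact hX.
  assert (hXP : X = xi * P).
  { unfold X, P. destruct k as [|k']; [lia|]. simpl. reflexivity. }
  set (N := (1 + X) - K * P * (xi - a*theta)).
  set (c := 2*xi - a*(1+theta)).
  assert (hXc : X * c = a - xi) by (unfold psi in hpsi; fold X c in hpsi; lra).
  assert (E2 : xi * N * c = (xi - a*theta) * (xi - K*(a-xi))).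
  { replace (xi * N * c) with (xi*c + xi*(X*c) - K*(xi*P)*c*(xi-a*theta)) by (unfold N; ring).
    rewrite <- hXP, hXc. replace (K*X*c*(xi-a*theta)) with (K*(X*c)*(xi-a*theta)) by ring.
    rewrite hXc. unfold c. ring. }
  assert (S1 : -1 + N / (1+X)^2 < -1 <-> (K+1)*xi < K*a).
  { assert (hw : 0 < / (1+X)^2) by (apply Rinv_0_lt_compat; apply pow_lt; lra).
    unfold Rdiv.
    assert (A1 : -1 + N * / (1+X)^2 < -1 <-> 0 < -N) by (rewrite (pos_mul (/(1+X)^2) (-N)) by exact hw; split; intros; lra).
    rewrite A1.
    rewrite (pos_mul (xi*c) (-N)) by nra.
    replace (-N * (xi*c)) with (-(xi*N*c)) by ring. rewrite E2.
    replace (- ((xi - a * theta) * (xi - K * (a - xi)))) with ((K*a - (K+1)*xi)*(xi - a*theta)) by ring.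
    rewrite <- (pos_mul (xi - a*theta)) by lra. lra. }
  fold K. rewrite S1. clear S1.
  set (D := K - 1 - (K+1)*theta).
  set (x0 := a * (K/(K+1))).
  assert (hx0 : x0 * (K+1) = K*a) by (unfold x0; field; lra).
  assert (hx0p : 0 < x0) by (unfold x0; apply Rmult_lt_0_compat; [lra| apply Rdiv_lt_0_compat; lra]).
  assert (hc0 : 2*x0 - a*(1+theta) = a * D / (K+1)) by (unfold x0, D; field; lra).
  assert (A2 : theta < (K-1)/(K+1) <-> 0 < D).
  { replace ((K-1)/(K+1)) with (theta + D/(K+1)) by (unfold D; field; lra).
    unfold Rdiv. rewrite (pos_mul (/(K+1)) D) by (apply Rinv_0_lt_compat; lra). lra. }
  rewrite A2.
  set (r := (K/(K+1))^k).
  set (Q := ((K+1)/K)^k).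
  assert (hrQ : Q * r = 1).
  { unfold Q, r. rewrite <- Rpow_mult_distr. replace ((K+1)/K * (K/(K+1))) with 1 by (field; lra). apply pow1. }
  assert (hr : 0 < r) by (unfold r; apply pow_lt; apply Rdiv_lt_0_compat; lra).
  assert (hx0k : x0^k = lambda * r) by (unfold x0, lambda, r; apply Rpow_mult_distr).
  assert (A3 : 0 < D -> (lambda > / D * Q <-> 0 < psi k a theta x0)).
  { intros hD. unfold psi. rewrite hc0, hx0k.
    unfold Rgt. rewrite <- Rlt_0_minus.
    rewrite (pos_mul (D*r) (lambda - /D*Q)) by nra.
    replace ((lambda - / D * Q) * (D * r)) with (lambda*r*D - Q*r) by (field; lra).
    rewrite hrQ.
    replace (lambda * r * (a * D / (K + 1)) - (a - x0)) with ((lambda*r*D - 1) * (a/(K+1)))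
      by (unfold x0; field; lra).
    rewrite <- (pos_mul (a/(K+1))) by (apply Rdiv_lt_0_compat; lra). lra. }
  split.
  - intros H. assert (hlt : xi < x0) by nra.
    assert (hD : 0 < D).
    { assert (0 < a * D / (K+1)) by (rewrite <- hc0; fold c; lra).
      unfold Rdiv in H0. rewrite (pos_mul (a*/(K+1)) D) by (apply Rmult_lt_0_compat; [lra| apply Rinv_0_lt_compat; lra]).
      replace (D * (a * / (K + 1))) with (a * D * / (K + 1)) by ring. exact H0. }
    split; [exact hD|]. apply A3; auto.
    pose proof (psi_lt k a theta xi x0 ltac:(lra) ltac:(left; exact hc)). lra.
  - intros [hD hl]. apply A3 in hl; auto.
    destruct (Rlt_le_dec xi x0) as [h|h]; [nra|].
    exfalso. destruct h as [h|h].
    + assert (0 <= 2*x0 - a*(1+theta)) by (rewrite hc0; apply Rmult_le_pos; [nra| left; apply Rinv_0_lt_compat; lra]).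
      pose proof (psi_lt k a theta x0 xi ltac:(lra) H). lra.
    + rewrite h in hl. lra.
Qed.
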